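(* As formal power series in $z$ with coefficients polynomials in $t$, \[ F(t,z)=\sum_{n\ge 0}\sum_{w\in S_n} t^{\operatorname{dep}(w)} z^n = \cfrac{1}{1 - \cfrac{z}{1 - \cfrac{tz}{1 - \cfrac{2tz}{1 - \cfrac{2t^2 z}{1 - \cfrac{3t^2 z}{1 - \cfrac{3t^3 z}{1-\cdots}}}}}}}, \] the $S$-fraction in which, numbering the partial numerators $c_0 z, c_1 z, c_2 z,\dots$ starting from $c_0 z = z$, one has $c_{2k}=(k+1)t^k$ and $c_{2k+1}=(k+1)t^{k+1}$ for all $k\ge 0$.
   Context: $S_0$ consists of the single empty permutation, of depth $0$. For $w\in S_n$, the depth is $\operatorname{dep}(w)=\sum_{i:\,w(i)>i}(w(i)-i)$, i.e. half the total displacement $\sum_{i=1}^n |w(i)-i|$. *)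

(* Defs.v *)
From HB Require Import structures.
From mathcomp Require Import all_boot all_order all_algebra all_fingroup.
Set Implicit Arguments. Unset Strict Implicit. Unset Printing Implicit Defensive.
Import GRing.Theory.
Local Open Scope ring_scope.

(* Depth of a permutation w of {0,..,n-1} (0-indexed; same value as 1-indexed):
   dep(w) = sum_{i : w(i) > i} (w(i) - i). *)
Definition dep n (w : 'S_n) : nat :=
  (\sum_(i : 'I_n | (i < w i)%N) (w i - i))%N.

Definition depth_gen (n : nat) : {poly int} := \sum_(w : 'S_n) 'X^(dep w).

(* Coefficients of the S-fraction: c_{2k} = (k+1) t^k, c_{2k+1} = (k+1) t^(k+1). *)
Definition cfcoef (j : nat) : {poly int} := (j./2).+1%:R *: 'X^(j./2 + odd j).

(* Power series in z with coefficients in Z[t] are handled modulo z^m, as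
   polynomials in z ({poly {poly int}}). For q with zero constant term,
   geom_inv m q = sum_{k<m} q^k is the inverse of (1 - q) modulo z^m. *)
Definition geom_inv (m : nat) (q : {poly {poly int}}) : {poly {poly int}} :=
  \sum_(k < m) q ^+ k.

(* Depth-N convergent of the S-fraction started at level j, modulo z^m:
   T_j = 1 / (1 - c_j z T_{j+1}), with the tail at depth N replaced by 1
   (i.e. c_{j+N} z and beyond set to 0). *)
Fixpoint sfrac (m : nat) (c : nat -> {poly int}) (N j : nat) : {poly {poly int}} :=
  match N with
  | 0 => 1
  | N'.+1 => geom_inv m ((c j)%:P * 'X * sfrac m c N' j.+1)
  end.

(* Main.v *)
From HB Require Import structures.
From mathcomp Require Import all_boot all_order all_algebra all_fingroup.
From mathcomp Require Import ring zify.
Require Import Defs.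
Set Implicit Arguments. Unset Strict Implicit. Unset Printing Implicit Defensive.
Import GRing.Theory.
Local Open Scope ring_scope.

Fixpoint Dy (m k : nat) : {poly int} :=
  match m with
  | 0 => (k == 0%N)%:R
  | m'.+1 => (if k is k'.+1 then Dy m' k' else 0) + cfcoef k * Dy m' k.+1
  end.

Lemma Dy_gt m k : (m < k)%N -> Dy m k = 0.
Proof.
elim: m k => [|m IH] [|k] //= H.
rewrite !IH ?mulr0 ?addr0 //; lia.
Qed.

Lemma Dy_diag k : Dy k k = 1.
Proof. by elim: k => [|k IH] //=; rewrite IH Dy_gt ?mulr0 ?addr0. Qed.

Definition eqm m (p q : {poly {poly int}}) := forall i, (i < m)%N -> p`_i = q`_i.

Lemma eqm_mulr m p q r : eqm m p q -> eqm m (p * r) (q * r).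
Proof.
move=> H i Hi; rewrite !coefM; apply: eq_bigr => j _; rewrite H //.
have := ltn_ord j; lia.
Qed.

Lemma geomE m q : eqm m (geom_inv m ('X * q)) (1 + 'X * q * geom_inv m ('X * q)).
Proof.
move=> i Hi.
set G := geom_inv m _.
have E : G = 1 + 'X * q * G - ('X * q) ^+ m.
  have := subrX1 ('X * q) m; rewrite -/(geom_inv m _) -/G => E.
  apply/eqP; rewrite -subr_eq0; apply/eqP.
  have -> : G - (1 + 'X * q * G - ('X * q) ^+ m) = ('X * q) ^+ m - 1 - ('X * q - 1) * G by ring.
  by rewrite E subrr.
rewrite {1}E coefB exprMn coefXnM Hi subr0 //.
Qed.

Definition Wp m N k := \prod_(i < k) sfrac m cfcoef (N - i) i.

Lemma Wp_rec m N k : (k < N)%N ->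
  eqm m (Wp m N k.+1) (Wp m N k + (cfcoef k)%:P * 'X * Wp m N k.+2).
Proof.
move=> kN.
rewrite /Wp !big_ord_recr /=.
have -> : (N - k = (N - k.+1).+1)%N by lia.
rewrite /=.
set T1 := sfrac m cfcoef (N - k.+1) k.+1.
set W := \prod_(i < k) _.
have -> : (cfcoef k)%:P * 'X * T1 = 'X * ((cfcoef k)%:P * T1) by ring.
set G := geom_inv m _.
move=> i Hi.
rewrite [W * G]mulrC (@eqm_mulr m G _ W (@geomE m _) i Hi).
rewrite -/G; apply: (congr1 (fun p : {poly {poly int}} => p`_i)); ring.
Qed.

Lemma coef_cX (c : {poly int}) (p : {poly {poly int}}) i :
  (c%:P * 'X * p)`_i = if i is i'.+1 then c * p`_i' else 0.
Proof. by rewrite -mulrA coefCM coefXM; case: i => [|i] /=; rewrite ?mulr0. Qed.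

Lemma Wp_coef m N k i : (k < N)%N -> (i < m)%N ->
  (Wp m N k.+1)`_i = (Wp m N k)`_i + (if i is i'.+1 then cfcoef k * (Wp m N k.+2)`_i' else 0).
Proof. by move=> kN im; rewrite (Wp_rec kN im) coefD coef_cX. Qed.

Lemma Wp0 m N i : (Wp m N 0)`_i = (i == 0%N)%:R.
Proof. by rewrite /Wp big_ord0 coef1. Qed.

Lemma frac_D n N : (n < N)%N -> forall n' k, (n' + k <= n)%N ->
  (Wp n.+1 N k.+1)`_n' = Dy (n'.*2 + k) k.
Proof.
move=> nN; elim=> [|n' IH] k.
  elim: k => [|k IHk] Hk.
    by rewrite Wp_coef ?Wp0 ?addr0 //; lia.
  rewrite Wp_coef ?addr0 ?IHk; try lia.
  by rewrite add0n !Dy_diag.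
elim: k => [|k IHk] Hk.
  rewrite Wp_coef ?Wp0; try lia.
  rewrite IH; last lia.
  by rewrite addn0 addn1 doubleS.
rewrite Wp_coef; try lia.
rewrite IH ?IHk; try lia.
have -> : (n'.+1.*2 + k.+1 = (n'.+1.*2 + k).+1)%N by lia.
have -> : (n'.*2 + k.+2 = n'.+1.*2 + k)%N by rewrite doubleS; lia.
by [].
Qed.

Lemma frac_main n N : (n < N)%N -> (sfrac n.+1 cfcoef N 0)`_n = Dy n.*2 0.
Proof.
move=> nN; have := @frac_D n N nN n 0 (eq_leq (addn0 n)) ; rewrite addn0 /Wp big_ord1 subn0 /=.
by move=> <-.
Qed.

Lemma cf_even j : cfcoef j.*2 = (j.+1)%:R *: ('X^j : {poly int}).
Proof. by rewrite /cfcoef half_double odd_double addn0. Qed.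

Lemma cf_odd j : cfcoef j.*2.+1 = (j.+1)%:R *: ('X^(j.+1) : {poly int}).
Proof. by rewrite /cfcoef /= uphalf_double odd_double addn1. Qed.

Lemma Dy2 m j : Dy m.+2 j.*2 = (if j is j'.+1 then Dy m j'.*2 else 0)
  + (j.*2.+1)%:R * 'X^j * Dy m j.*2 + (j.+1 * j.+1)%:R * ('X^j * 'X^(j.+1)) * Dy m j.+1.*2.
Proof.
case: j => [|j].
  rewrite /= (cf_even 0) (cf_odd 0) -!mul_polyC !polyC_natr expr0 ?doubleS ?double0; ring.
rewrite [in LHS]doubleS /= cf_odd -!doubleS cf_even cf_odd.
rewrite -!mul_polyC !polyC_natr.
rewrite natrM; have -> : ((j.+1.*2.+1)%:R : {poly int}) = j.+1%:R + j.+2%:R by rewrite -natrD; congr _%:R; lia.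
ring.
Qed.

Lemma big_opt (T : finType) (F : option T -> nat) :
  (\sum_(x : option T) F x = F None + \sum_(v : T) F (Some v))%N.
Proof.
rewrite (bigD1 None) //=; congr (_ + _)%N.
rewrite (reindex_omap Some (fun o => o)) => [|[v|] //].
by apply: eq_bigl => v; rewrite eqxx.
Qed.

Lemma card_sumb (T : finType) (P : pred T) : #|P| = (\sum_(i : T) (P i : nat))%N.
Proof. by rewrite -sum1_card big_mkcond; apply: eq_bigr => i _; rewrite unfold_in; case: (P i). Qed.

Lemma sum_andr (T : finType) (P : pred T) (E : bool) :
  (\sum_(i : T) ((P i && E) : nat) = E * #|P|)%N.
Proof.
rewrite card_sumb; case: E; last by rewrite mul0n big1 // => i _; rewrite andbF.
by rewrite mul1n; apply: eq_bigr => i _; rewrite andbT.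
Qed.

Section PermSide.
Variable n : nat.
Local Notation pfun := {ffun 'I_n -> option 'I_n}.

Definition ino (b : nat) (o : option 'I_n) : bool :=
  if o is Some v then (v < b)%N else false.

Definition isPI (a : nat) (f : pfun) : bool :=
  [forall i, (f i != None) ==> ((i < a)%N && ino a (f i))] &&
  [forall i, forall j, (f i != None) ==> (f i == f j) ==> (i == j)].

Lemma isPIP a (f : pfun) : reflect
  ((forall i v, f i = Some v -> (i < a)%N /\ (v < a)%N) /\
   (forall i j v, f i = Some v -> f j = Some v -> i = j)) (isPI a f).
Proof.
apply: (iffP andP) => [[/forallP H1 /forallP H2]|[H1 H2]]; split.
- move=> i v E; have := H1 i; rewrite E /= => /andP[-> ->]; done.
- move=> i j v Ei Ej; have /forallP/(_ j) := H2 i.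
  by rewrite Ei Ej eqxx /= => /eqP.
- apply/forallP => i; case E: (f i) => [v|] //=.
  by have [-> ->] := H1 _ _ E.
- apply/forallP => i; apply/forallP => j; case E: (f i) => [v|] //=.
  by apply/implyP => /eqP Ej; apply/eqP; apply: (H2 _ _ v).
Qed.

Definition cnt (b : nat) (f : pfun) : nat :=
  #|[pred i : 'I_n | (i < b)%N && ino b (f i)]|.
Definition wt (a : nat) (f : pfun) : nat := (\sum_(b < a) (b.+1 - cnt b.+1 f))%N.
Definition Q (a j : nat) : {poly int} :=
  \sum_(f : pfun | isPI a f && (a - cnt a f == j)%N) 'X^(wt a f).
Definition restr (a : nat) (f : pfun) : pfun :=
  [ffun i : 'I_n => if (i < a)%N && ino a (f i) then f i else None].

Lemma cnt_restr a b (f : pfun) : (b <= a)%N -> cnt b (restr a f) = cnt b f.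
Proof.
move=> ba; apply: eq_card => i /=; rewrite !inE /restr ffunE.
case: (ltnP i b) => //= ib; case: (f i) => [v|] /=; last by rewrite andbF.
case: (ltnP v b) => vb; first by rewrite (leq_trans ib ba) (leq_trans vb ba).
by case: ifP => //= _; rewrite ltnNge vb.
Qed.

Lemma wt_restr a (f : pfun) : wt a.+1 f = (wt a (restr a f) + (a.+1 - cnt a.+1 f))%N.
Proof.
rewrite /wt big_ord_recr /=; congr (_ + _)%N.
by apply: eq_bigr => b _; rewrite cnt_restr.
Qed.

Lemma restr_PI a (f : pfun) : isPI a.+1 f -> isPI a (restr a f).
Proof.
move=> /isPIP [H1 H2]; apply/isPIP; split.
- move=> i v; rewrite /restr ffunE; case: ifP => // /andP[ia]; case: (f i) => //= w wa [<-]; done.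
- move=> i j v; rewrite /restr !ffunE; case: ifP => // _ Ei; case: ifP => // _ Ej.
  exact: H2 Ei Ej.
Qed.

Lemma cntE a (f : pfun) : isPI a f -> cnt a f = #|[pred i | f i != None]|.
Proof.
move=> /isPIP [H1 _]; apply: eq_card => i; rewrite !inE.
case E: (f i) => [v|] /=; last by rewrite andbF.
by have [-> ->] := H1 _ _ E.
Qed.

Lemma card_lt c : (c <= n)%N -> #|[pred i : 'I_n | (i < c)%N]| = c.
Proof.
move=> cn; rewrite -sum1_card.
rewrite -[RHS]card_ord -sum1_card (big_ord_widen _ (fun _ => 1%N) cn).
by apply: eq_bigl.
Qed.

Lemma cnt_le a (f : pfun) : (a <= n)%N -> (cnt a f <= a)%N.
Proof.
move=> an; rewrite -{2}(card_lt an); apply: subset_leq_card.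
by apply/subsetP => i /= /andP[].
Qed.


Definition pre (g : pfun) (v : 'I_n) : option 'I_n := [pick i | g i == Some v].

Lemma pre_some (g : pfun) v i : pre g v = Some i -> g i = Some v.
Proof. by rewrite /pre; case: pickP => // j /eqP E [<-]. Qed.

Lemma pre_none (g : pfun) v : pre g v = None -> forall i, g i != Some v.
Proof. by rewrite /pre; case: pickP => // H _ i; rewrite H. Qed.

Lemma pre_noneI (g : pfun) v : (forall i, g i != Some v) -> pre g v = None.
Proof. by move=> H; rewrite /pre; case: pickP => // i; rewrite (negbTE (H i)). Qed.

Lemma preS (g : pfun) v i : (forall i j, g i = Some v -> g j = Some v -> i = j) ->
  g i = Some v -> pre g v = Some i.
Proof.
move=> inj E; rewrite /pre; case: pickP => [j /eqP Ej|H]; first by rewrite (inj _ _ Ej E).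
by have := H i; rewrite E eqxx.
Qed.

Section Fiber.
Variable oa : 'I_n.

Definition build (f : pfun) (x y : option 'I_n) : pfun :=
  [ffun i : 'I_n => if i == oa then x else if y == Some i then Some oa else f i].

Definition valid (f : pfun) (x y : option 'I_n) : bool :=
  match x, y with
  | None, None => true
  | Some v, None => (v < oa)%N && (pre f v == None)
  | None, Some p => (p < oa)%N && (f p == None)
  | Some v, Some p => ((v == oa) && (p == oa)) ||
                      [&& (v < oa)%N, pre f v == None, (p < oa)%N & f p == None]
  end.

Lemma PI_oa (f : pfun) : isPI oa f -> f oa = None.
Proof.
move=> /isPIP [H1 _]; case E: (f oa) => [v|] //.
by have [] := H1 _ _ E; rewrite ltnn.
Qed.

Lemma build_oa f x y : build f x y oa = x.
Proof. by rewrite /build ffunE eqxx. Qed.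

Lemma build_E f x y i v : build f x y i = Some v ->
  [\/ i = oa /\ x = Some v, i != oa /\ y = Some i /\ v = oa |
      [/\ i != oa, y != Some i & f i = Some v]].
Proof.
rewrite /build ffunE; case: eqP => [->|/eqP io]; first by constructor 1.
case: eqP => [Ey [<-]|/eqP Ey E]; first by constructor 2.
by constructor 3.
Qed.

Section Valid.
Variables (f : pfun) (x y : option 'I_n).
Hypothesis Hv : valid f x y.
Lemma Fx v : x = Some v -> v = oa \/ ((v < oa)%N /\ pre f v = None).
Proof.
move=> Ex; move: Hv; rewrite Ex; case: y => [p|] /=.
  by case/orP => [/andP[/eqP -> _]|/and4P[? /eqP ? _ _]]; [left|right].
by case/andP => ? /eqP ?; right.
Qed.
Lemma Fxo : x = Some oa -> y = Some oa.
Proof.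
move=> Ex; move: Hv; rewrite Ex; case: y => [p|] /=.
  by case/orP => [/andP[_ /eqP -> //]|/and4P[]]; rewrite ltnn.
by rewrite ltnn.
Qed.
Lemma Fy p : y = Some p -> p = oa \/ ((p < oa)%N /\ f p = None).
Proof.
move=> Ey; move: Hv; rewrite Ey; case: x => [w|] /=.
  by case/orP => [/andP[_ /eqP -> ]|/and4P[_ _ ? /eqP ?]]; [left|right].
by case/andP => ? /eqP ?; right.
Qed.
Lemma Fyo : y = Some oa -> x = Some oa.
Proof.
move=> Ey; move: Hv; rewrite Ey; case: x => [w|] /=.
  by case/orP => [/andP[/eqP -> //]|/and4P[]]; rewrite ltnn.
by rewrite ltnn.
Qed.
End Valid.

Lemma build_PI f x y : isPI oa f -> valid f x y -> isPI oa.+1 (build f x y).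
Proof.
move=> Hf Hv; have /isPIP [H1 H2] := Hf; apply/isPIP; split.
- move=> i v /build_E [[-> Ex]|[io [Ey ->]]|[io Ey E]].
  + by case: (Fx Hv Ex) => [->|[]]; lia.
  + by case: (Fy Hv Ey) => [Ei|[]]; [move: io; rewrite Ei eqxx|lia].
  + by have [] := H1 _ _ E; lia.
- have Hfo : forall i v, f i = Some v -> (v < oa)%N by move=> i v /H1 [].
  move=> i j v /build_E [[-> Ex]|[io [Ey ->]]|[io Ey E]] /build_E [[-> Ex']|[jo [Ey' Ev]]|[jo Ey' E']] //.
  + by move: (Fxo Hv); rewrite Ex Ev Ey' => /(_ erefl) [Ej]; move: jo; rewrite Ej eqxx.
  + case: (Fx Hv Ex) => [Evo|[_ Pn]]; first by have := Hfo _ _ E'; rewrite Evo ltnn.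
    by have := pre_none Pn j; rewrite E' eqxx.
  + by move: (Fxo Hv Ex'); rewrite Ey => -[Ei]; move: io; rewrite Ei eqxx.
  + by move: Ey'; rewrite Ey => -[].
  + by have := Hfo _ _ E'; rewrite ltnn.
  + case: (Fx Hv Ex') => [Evo|[_ Pn]]; first by have := Hfo _ _ E; rewrite Evo ltnn.
    by have := pre_none Pn i; rewrite E eqxx.
  + by have := Hfo _ _ E; rewrite Ev ltnn.
  + exact: H2 E E'.
Qed.

Lemma ltn_ne (i : 'I_n) : (i < oa.+1)%N -> i != oa -> (i < oa)%N.
Proof. by move=> H1 H2; rewrite ltn_neqAle -ltnS H1 andbT. Qed.

Lemma restr_some (g : pfun) i v : restr oa g i = Some v -> g i = Some v /\ (i < oa)%N.
Proof. by rewrite /restr ffunE; case: ifP => // /andP[-> _]. Qed.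

Lemma restr_oaN (g : pfun) p : g p = Some oa -> restr oa g p = None.
Proof. by rewrite /restr ffunE => ->; rewrite /= ltnn andbF. Qed.

Lemma build_restr f x y : isPI oa f -> valid f x y -> restr oa (build f x y) = f.
Proof.
move=> Hf Hv; have /isPIP [H1 H2] := Hf.
apply/ffunP => i; rewrite /restr ffunE.
case E: (f i) => [v|].
  have [io vo] := H1 _ _ E.
  have -> : build f x y i = Some v.
    rewrite /build ffunE; have -> : (i == oa) = false by apply/negbTE; move: io; apply: contraTneq => ->; rewrite ltnn.
    case: eqP => [Ey|//]; case: (Fy Hv Ey) => [Ei|[_ Fi]]; first by move: io; rewrite Ei ltnn.
    by move: E; rewrite Fi.
  by rewrite io /= vo.
case: ifP => // /andP[ia]; case E': (build f x y i) => [w|] //= wa.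
case/build_E: E' => [[Ei _]|[_ [_ Ew]]|[_ _ Fi]].
- by move: ia; rewrite Ei ltnn.
- by move: wa; rewrite Ew ltnn.
- by move: E; rewrite Fi.
Qed.

Lemma build_pre f x y : isPI oa f -> valid f x y -> pre (build f x y) oa = y.
Proof.
move=> Hf Hv; have /isPIP [H1 H2] := Hf.
have /isPIP [_ G2] := build_PI Hf Hv.
case Ey: y => [p|].
  rewrite -[in build _ _ _]Ey.
  apply: (@preS (build f x y) oa p (fun i j => G2 i j oa) _).
  rewrite /build ffunE; case: eqP => [Ep|_]; last by rewrite Ey eqxx.
  by apply: (Fyo Hv); rewrite Ey Ep.
rewrite -[in build _ _ _]Ey.
apply: pre_noneI => i; apply/eqP => /build_E [[_ Ex]|[_ [E _]]|[_ _ Fi]].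
- by move: (Fxo Hv Ex); rewrite Ey.
- by move: E; rewrite Ey.
- by have [_] := H1 _ _ Fi; rewrite ltnn.
Qed.

Lemma fiber_build (g : pfun) : isPI oa.+1 g -> build (restr oa g) (g oa) (pre g oa) = g.
Proof.
move=> /isPIP [H1 H2].
apply/ffunP => i; rewrite /build ffunE.
case: eqP => [->//|/eqP io].
case: eqP => [Ep|Np]; first by rewrite (pre_some Ep).
rewrite /restr ffunE; case E: (g i) => [v|]; last by rewrite if_same.
have [ia va] := H1 _ _ E.
rewrite (ltn_ne ia io) /=.
case: (eqVneq v oa) => [Ev|vo]; last by rewrite (ltn_ne va vo).
by case: Np; apply: preS; [move=> ? ?; apply: H2|rewrite E Ev].
Qed.

Lemma fiber_valid (g : pfun) : isPI oa.+1 g -> valid (restr oa g) (g oa) (pre g oa).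
Proof.
move=> /isPIP [H1 H2].
have preN : forall v, g oa = Some v -> pre (restr oa g) v == None.
  move=> v Ev; apply/eqP/pre_noneI => i; apply/eqP => /restr_some [Ei ia].
  by move: ia; rewrite (H2 _ _ _ Ei Ev) ltnn.
have injo : forall i j, g i = Some oa -> g j = Some oa -> i = j by move=> ? ?; apply: H2.
case Ex: (g oa) => [v|]; case Ey: (pre g oa) => [p|] /=.
- have Gp := pre_some Ey.
  case: (eqVneq p oa) => [Ep|po].
    by move: Ex; rewrite -Ep Gp => -[<-]; rewrite Ep eqxx.
  apply/orP; right.
  have [pa _] := H1 _ _ Gp; have [_ va] := H1 _ _ Ex.
  rewrite (ltn_ne pa po) (preN _ Ex) (restr_oaN Gp) eqxx andbT /=.
  rewrite andbT; apply: ltn_ne va _; apply/eqP => Ev; move: Ex; rewrite Ev => Ex.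
  by move: po; rewrite (injo _ _ Gp Ex) eqxx.
- have [_ va] := H1 _ _ Ex.
  rewrite (preN _ Ex) andbT; apply: ltn_ne va _; apply/eqP => Ev.
  by move: Ey; rewrite (preS injo (etrans Ex (congr1 Some Ev))).
- have Gp := pre_some Ey; have [pa _] := H1 _ _ Gp.
  rewrite (restr_oaN Gp) eqxx andbT; apply: ltn_ne pa _; apply/eqP => Ep.
  by move: Ex; rewrite -Ep Gp.
- done.
Qed.

Definition nb (x y : option 'I_n) : nat :=
  match x, y with
  | None, None => 0
  | Some v, Some p => if v == oa then 1%N else 2%N
  | _, _ => 1%N
  end.

Lemma cnt_build f x y : isPI oa f -> valid f x y ->
  cnt oa.+1 (build f x y) = (cnt oa f + nb x y)%N.
Proof.
move=> Hf Hv; rewrite (cntE (build_PI Hf Hv)) (cntE Hf).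
have fo := PI_oa Hf.
have /isPIP [H1 _] := Hf.
set D := [pred i | f i != None].
have oD : oa \notin D by rewrite inE fo.
have U1 : forall (x : 'I_n) (A : pred 'I_n), x \notin A -> #|[predU1 x & A]| = #|A|.+1.
  by move=> x0 A H; rewrite cardU1 H.
move: Hv; case: x => [v|]; case: y => [p|] /= Hv.
- case/orP: Hv => [/andP[/eqP vo /eqP po]|/and4P[va _ pa /eqP fp]].
    rewrite vo eqxx addn1 -(U1 oa) //; apply: eq_card => i; rewrite !inE /build ffunE.
    case: (eqVneq i oa) => [->|io] //=; rewrite po; case: (eqVneq (Some oa) (Some i)) => [[E]|_] //.
    by rewrite E eqxx in io.
  have vo : (v == oa) = false by apply/negbTE; apply: contraTneq va => ->; rewrite ltnn.
  have po : p != oa by apply: contraTneq pa => ->; rewrite ltnn.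
  have pD : p \notin D by rewrite inE fp.
  rewrite vo addn2 -(U1 p) // -(U1 oa); last by rewrite !inE eq_sym (negbTE po) fo.
  apply: eq_card => i; rewrite !inE /build ffunE.
  case: (eqVneq i oa) => [->|io] //=; case: (eqVneq (Some p) (Some i)) => [[<-]|ip] /=; first by rewrite eqxx.
  by case: (eqVneq i p) => // E; rewrite E eqxx in ip.
- rewrite addn1 -(U1 oa) //; apply: eq_card => i; rewrite !inE /build ffunE.
  by case: (eqVneq i oa).
- case/andP: Hv => pa /eqP fp.
  have po : p != oa by apply: contraTneq pa => ->; rewrite ltnn.
  have pD : p \notin D by rewrite inE fp.
  rewrite addn1 -(U1 p) //; apply: eq_card => i; rewrite !inE /build ffunE.
  case: (eqVneq i oa) => [->|io] /=; first by rewrite fo eq_sym (negbTE po).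
  case: (eqVneq (Some p) (Some i)) => [[<-]|ip] /=; first by rewrite eqxx.
  by case: (eqVneq i p) => // E; rewrite E eqxx in ip.
- rewrite addn0; apply: eq_card => i; rewrite !inE /build ffunE.
  by case: (eqVneq i oa) => // ->; rewrite fo.
Qed.

Lemma freeP f : isPI oa f ->
  #|[pred p : 'I_n | (p < oa)%N && (f p == None)]| = (oa - cnt oa f)%N.
Proof.
move=> Hf; have /isPIP [H1 _] := Hf.
have E := cardID [pred p : 'I_n | f p != None] [pred p : 'I_n | (p < oa)%N].
rewrite card_lt ?(ltnW (ltn_ord oa)) // in E; rewrite (cntE Hf).
have E2 : #|[predI [pred p : 'I_n | (p < oa)%N] & [pred p | f p != None]]| =
          #|[pred i | f i != None]|.
  apply: eq_card => i; rewrite !inE; case E': (f i) => [v|] /=; last by rewrite andbF.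
  by have [-> _] := H1 _ _ E'.
have E3 : #|[pred p : 'I_n | (p < oa)%N && (f p == None)]| =
   #|[predD [pred p : 'I_n | (p < oa)%N] & [pred p | f p != None]]|.
  by apply: eq_card => i; rewrite !inE andbC negbK.
rewrite E3 -[in RHS]E E2 addKn; apply: eq_card => i; by rewrite !inE.
Qed.

Lemma freeV f : isPI oa f ->
  #|[pred v : 'I_n | (v < oa)%N && (pre f v == None)]| = (oa - cnt oa f)%N.
Proof.
move=> Hf; have /isPIP [H1 H2] := Hf.
have E := cardID [pred v : 'I_n | pre f v != None] [pred p : 'I_n | (p < oa)%N].
rewrite card_lt ?(ltnW (ltn_ord oa)) // in E; rewrite (cntE Hf).
set D := [pred i : 'I_n | f i != None].
have E2 : #|[predI [pred p : 'I_n | (p < oa)%N] & [pred v | pre f v != None]]| = #|D|.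
  rewrite -(@card_in_imset _ _ (fun i => odflt i (f i)) D).
    apply: eq_card => v; rewrite !inE.
    apply/idP/imsetP.
      case/andP=> _; case Ep: (pre f v) => [i|] // _; exists i; last by rewrite (pre_some Ep).
      by rewrite inE (pre_some Ep).
    case=> i; rewrite inE; case Ei: (f i) => [w|] //= _ ->.
    by rewrite (preS (fun a b => H2 a b w) Ei) andbT; have [] := H1 _ _ Ei.
  move=> i j; rewrite !inE; case Ei: (f i) => [v|] //; case Ej: (f j) => [w|] //= _ _ vw.
  by apply: (H2 _ _ v) => //; rewrite Ej vw.
have E3 : #|[pred v : 'I_n | (v < oa)%N && (pre f v == None)]| =
   #|[predD [pred p : 'I_n | (p < oa)%N] & [pred v | pre f v != None]]|.
  by apply: eq_card => i; rewrite !inE andbC negbK.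
rewrite E3 -[in RHS]E E2 addKn; apply: eq_card => i; by rewrite !inE.
Qed.

Definition Nf k j := ((k.+1 == j) + j.*2.+1 * (k == j) + j.+1 * j.+1 * (k == j.+1))%N.

Lemma fiber_card f j : isPI oa f ->
  #|[pred g | (isPI oa.+1 g && (oa.+1 - cnt oa.+1 g == j)%N) && (restr oa g == f)]| =
  Nf (oa - cnt oa f) j.
Proof.
move=> Hf.
set c := cnt oa f.
set V := [pred xy : option 'I_n * option 'I_n |
           valid f xy.1 xy.2 && (oa.+1 - (c + nb xy.1 xy.2) == j)%N].
have -> : #|[pred g | (isPI oa.+1 g && (oa.+1 - cnt oa.+1 g == j)%N) && (restr oa g == f)]|
        = #|[set build f xy.1 xy.2 | xy in V]|.
  apply: eq_card => g; rewrite !inE; apply/idP/imsetP.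
  - case/andP => /andP [Hg Hj] /eqP Er; exists (g oa, pre g oa); last first.
      by rewrite /= -Er fiber_build.
    have Hv := fiber_valid Hg; rewrite Er in Hv.
    rewrite inE /= Hv /= -(cnt_build Hf Hv) -{1}Er fiber_build //.
  - case=> -[x y]; rewrite inE /= => /andP[Hv Hj] ->.
    by rewrite build_PI // build_restr // eqxx cnt_build // Hj.
rewrite card_in_imset; last first.
  move=> [x y] [x' y']; rewrite !inE /= => /andP[Hv _] /andP[Hv' _] E.
  by rewrite -(build_oa f x y) E build_oa -(build_pre Hf Hv) E build_pre.
have cle : (c <= oa)%N by apply: cnt_le; apply: ltnW.
set k := (oa - c)%N.
set E0 := (oa.+1 - c == j)%N.
set E1 := (oa.+1 - (c + 1) == j)%N.
set E2 := (oa.+1 - (c + 2) == j)%N.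
set fv := [pred v : 'I_n | (v < oa)%N && (pre f v == None)].
set fp := [pred p : 'I_n | (p < oa)%N && (f p == None)].
have Hfv : #|fv| = k by apply: freeV.
have Hfp : #|fp| = k by apply: freeP.
have C1 : #|eq_op^~ oa| = 1%N by rewrite -(card1 oa); apply: eq_card => p; rewrite !inE.
have -> : #|V| = (\sum_x \sum_y (V (x, y) : nat))%N.
  by rewrite card_sumb pair_bigA; apply: eq_bigr => -[x y] _.
have HA : (\sum_y (V (None, y) : nat) = E0 + E1 * k)%N.
  rewrite big_opt /= addn0; congr (_ + _)%N; rewrite -Hfp -sum_andr.
  by apply: eq_bigr => p _; rewrite !inE.
have HB : forall v, (\sum_y (V (Some v, y) : nat) =
     (fv v && E1) + ((v == oa) && E1) + (fv v && E2) * k)%N.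
  move=> v; rewrite big_opt /= -addnA; congr (_ + _)%N.
  transitivity (\sum_p (((p == oa) && ((v == oa) && E1)) + ((fp p) && (fv v && E2)) : nat))%N.
    apply: eq_bigr => p _; rewrite /V !inE /=.
    case: (eqVneq v oa) => [->|vo]; rewrite ?eqxx ?ltnn /=.
      by case: (p == oa); rewrite /= ?andbF ?addn0.
    rewrite andbF add0n; do 2 case: (_ < _)%N; rewrite ?andbF //=.
    by case: (pre f v == None); case: (f p == None).
  rewrite big_split /= !sum_andr; congr (_ + _)%N.
    by rewrite C1 muln1.
  by rewrite -Hfp; congr (_ * _)%N; apply: eq_card => p; rewrite !inE.
rewrite big_opt HA.
under eq_bigr do rewrite HB.
rewrite !big_split /= -big_distrl /= !sum_andr.
rewrite C1.
have -> : #|(fun v : 'I_n => fv v)| = k by rewrite -Hfv; apply: eq_card => p; rewrite !inE.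
rewrite  /Nf /E0 /E1 /E2 /k; lia.
Qed.

End Fiber.
Lemma QE a i : Q a i = \sum_(f | isPI a f) 'X^(wt a f) * ((a - cnt a f == i)%N)%:R.
Proof.
rewrite /Q big_mkcondr /=; apply: eq_bigr => f _.
by case: (_ == i); rewrite ?mulr1 ?mulr0.
Qed.

Lemma Q_rec (oa : 'I_n) j : Q oa.+1 j = 'X^j * ((if j is j'.+1 then Q oa j' else 0)
   + (j.*2.+1)%:R * Q oa j + (j.+1 * j.+1)%:R * Q oa j.+1).
Proof.
have F1 : (if j is j'.+1 then Q oa j' else 0) =
    \sum_(f | isPI oa f) 'X^(wt oa f) * (((oa - cnt oa f).+1 == j)%N)%:R.
  case: j => [|j']; last by rewrite QE.
  by rewrite big1 // => f _; rewrite mulr0.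
rewrite F1 !(QE oa) /Q.
transitivity (\sum_(g | isPI oa.+1 g && (oa.+1 - cnt oa.+1 g == j)%N)
    ('X^(wt oa (restr oa g)) * 'X^j : {poly int})).
  by apply: eq_bigr => g /andP[_ /eqP Hj]; rewrite wt_restr exprD Hj.
rewrite (partition_big (restr oa) (isPI oa)) /=; last first.
  by move=> g /andP[Hg _]; apply: restr_PI.
transitivity (\sum_(f | isPI oa f) ('X^(wt oa f) * 'X^j : {poly int}) *+ Nf (oa - cnt oa f) j).
  apply: eq_bigr => f Hf.
  rewrite (eq_bigr (fun _ => 'X^(wt oa f) * 'X^j)); last by move=> g /andP[_ /eqP ->].
  by rewrite sumr_const fiber_card.
rewrite !mulr_sumr -!big_split /= mulr_sumr; apply: eq_bigr => f _.
rewrite /Nf.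
ring.
Qed.

Lemma PI0 (f : pfun) : isPI 0 f = (f == [ffun => None]).
Proof.
apply/isPIP/eqP => [[H1 _]|->].
  apply/ffunP => i; rewrite ffunE; case E: (f i) => [v|] //.
  by have [] := H1 _ _ E.
by split => [i v|i j v]; rewrite ffunE.
Qed.

Lemma Q_base j : Q 0 j = (j == 0%N)%:R.
Proof.
rewrite QE (big_pred1 [ffun => None]) => [|f]; last by rewrite PI0.
by rewrite /wt big_ord0 expr0 mul1r sub0n eq_sym.
Qed.

Fixpoint tri j := if j is j'.+1 then (tri j' + j'.+1)%N else 0%N.

Lemma Q_D a : (a <= n)%N -> forall j, Q a j = 'X^(tri j) * Dy a.*2 j.*2.
Proof.
elim: a => [|a IH] Ha j.
  by rewrite Q_base /=; case: j => [|j]; rewrite ?expr0 ?mul1r ?doubleS ?mulr0.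
have E := Q_rec (Ordinal Ha) j; simpl in E; rewrite E (doubleS a) Dy2; clear E.
case: j => [|j]; rewrite !IH ?(ltnW Ha) //.
  by rewrite /= !expr0; ring.
have T1 : tri j.+1 = (tri j + j.+1)%N by [].
have T2 : tri j.+2 = (tri j + j.+1 + j.+2)%N by [].
rewrite T1 T2 !exprD; ring.
Qed.

Definition emb (w : 'S_n) : pfun := [ffun i => Some (w i)].

Lemma card_range lo hi : (hi <= n)%N ->
  #|[pred b : 'I_n | (lo <= b)%N && (b < hi)%N]| = (hi - lo)%N.
Proof.
move=> hn.
have E : (minn lo hi + #|[pred b : 'I_n | (lo <= b)%N && (b < hi)%N]| = hi)%N.
  rewrite -[RHS](card_lt hn) -(cardID [pred b : 'I_n | (b < lo)%N] [pred b : 'I_n | (b < hi)%N]).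
  congr (_ + _)%N; last by apply: eq_card => b; rewrite !inE -leqNgt andbC.
  rewrite -(@card_lt (minn lo hi)); last by rewrite geq_min hn orbT.
  by apply: eq_card => b; rewrite !inE leq_min andbC.
lia.
Qed.

Lemma wt_emb w : wt n (emb w) = dep w.
Proof.
rewrite /wt /dep.
transitivity (\sum_(b < n) #|[pred i : 'I_n | (i <= b)%N && (b < w i)%N]|)%N.
  apply: eq_bigr => b _.
  have E : (cnt b.+1 (emb w) + #|[pred i : 'I_n | (i <= b)%N && (b < w i)%N]| = b.+1)%N.
    rewrite -[RHS](@card_lt b.+1) // -(cardID [pred i : 'I_n | (w i < b.+1)%N] [pred i : 'I_n | (i < b.+1)%N]).
    congr (_ + _)%N; first by apply: eq_card => i; rewrite !inE ffunE.
    by apply: eq_card => i; rewrite !inE ltnS -ltnNge andbC.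
  lia.
transitivity (\sum_(i : 'I_n) (w i - i))%N; last first.
  rewrite [RHS]big_mkcond; apply: eq_bigr => i _; case: ltnP => // H.
  by apply/eqP; rewrite subn_eq0.
under eq_bigr do rewrite card_sumb.
rewrite exchange_big; apply: eq_bigr => i _.
rewrite -card_sumb card_range //; exact: ltnW (ltn_ord _).
Qed.

Lemma Qn_dep : Q n 0 = depth_gen n.
Proof.
rewrite /Q /depth_gen.
have Hset : forall f, (isPI n f && (n - cnt n f == 0)%N) =
    (f \in [set emb w | w in [set: 'S_n]]).
  move=> f; apply/idP/imsetP.
    case/andP => Hf Hc; have /isPIP [H1 H2] := Hf.
    have Hall : forall i, f i != None.
      rewrite (cntE Hf) subn_eq0 in Hc.
      have C := cardC [pred i | f i != None]; rewrite card_ord in C.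
      have C0 : #|[predC [pred i | f i != None]]| = 0%N.
        apply/eqP; rewrite -(eqn_add2l #|[pred i | f i != None]|) C addn0 eqn_leq Hc.
        by rewrite -[X in (_ <= X)%N](card_ord n) max_card.
      by move=> i; have := card0_eq C0 i; rewrite !inE => /negbFE.
    pose g i := odflt i (f i).
    have Sg : forall i, f i = Some (g i).
      by move=> i; rewrite /g; case E: (f i) => //; have := Hall i; rewrite E.
    have ginj : injective g by move=> i j E; apply: (H2 _ _ (g i)); [exact: Sg | rewrite E; exact: Sg].
    exists (perm ginj); first by rewrite in_setT.
    by apply/ffunP => i; rewrite ffunE permE Sg.
  case=> w _ ->; apply/andP; split.
    apply/isPIP; split => [i v|i j v]; rewrite !ffunE => -[<-]; first by split.
    by move=> [] /perm_inj.
  have -> : cnt n (emb w) = n.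
    rewrite -[RHS]card_ord; apply: eq_card => i; by rewrite !inE ffunE /= !ltn_ord.
  by rewrite subnn.
rewrite (eq_bigl _ _ Hset) big_imset /=; last first.
  move=> w1 w2 _ _ E; apply/permP => i.
  by have := congr1 (fun f : pfun => f i) E; rewrite !ffunE => -[].
apply: eq_big => [w|w _]; first by rewrite in_setT.
by rewrite wt_emb.
Qed.

End PermSide.

Theorem mainTheorem5 :
  forall n : nat, exists N0 : nat, forall N : nat, (N0 <= N)%N ->
    (sfrac n.+1 cfcoef N 0)`_n = depth_gen n.
Proof.
move=> n; exists n.+1 => N HN.
rewrite frac_main // -Qn_dep (Q_D (leqnn n)) /= expr0 mul1r.
by rewrite double0.
Qed.
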